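(* $\displaystyle\int_0^{\infty}\left[\sinh^{-1}(\cosh u) - u\right]\,du = \frac{\pi^2}{16}$.
   Context: $\sinh^{-1}$ denotes the real inverse hyperbolic sine, $\sinh^{-1}x = \ln\!\left(x+\sqrt{x^2+1}\right)$ for all real $x$. *)

(* Defs.v *)
From Stdlib Require Export Reals.
From Coquelicot Require Export Coquelicot.
Open Scope R_scope.
(* Stdlib's [arcsinh x := ln (x + sqrt (x ^ 2 + 1))] (Rpower.v) is exactly the
   real inverse hyperbolic sine of the paper; [cosh] is Stdlib's (Rtrigo_def). *)

(* Main.v *)
Require Import Defs.
From Stdlib Require Import Reals.
From Coquelicot Require Import Coquelicot.
From Stdlib Require Import Lra Lia Psatz FunctionalExtensionality.
Open Scope R_scope.

Definition N (w : R) := RInt (fun s => atan (sinh w * sin s)) 0 (PI/2).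
Definition dg (w s : R) := cosh w * sin s / (1 + (sinh w * sin s)^2).

Lemma is_derive_eq (f : R -> R) x l l' : is_derive f x l -> l = l' -> is_derive f x l'.
Proof. intros H ->; exact H. Qed.

Lemma is_derive_sinh x : is_derive sinh x (cosh x).
Proof. apply is_derive_Reals, derivable_pt_lim_sinh. Qed.
Lemma is_derive_cosh x : is_derive cosh x (sinh x).
Proof. apply is_derive_Reals, derivable_pt_lim_cosh. Qed.

Lemma pos1sq y : 0 < 1 + y^2.
Proof. nra. Qed.

Lemma dg_derive w s : is_derive (fun z => atan (sinh z * sin s)) w (dg w s).
Proof.
  eapply is_derive_eq.
  - apply (is_derive_comp atan (fun z => sinh z * sin s)).
    + apply is_derive_atan.
    + apply (is_derive_ext (fun z => sin s * sinh z)). intros; simpl; ring.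
      apply is_derive_scal, is_derive_sinh.
  - unfold dg, scal; simpl; unfold mult; simpl; unfold Rsqr.
    field. generalize (pos1sq (sinh w * sin s)). simpl. lra.
Qed.

Lemma Derive_dg w s : Derive (fun z => atan (sinh z * sin s)) w = dg w s.
Proof. apply is_derive_unique, dg_derive. Qed.

Lemma cont_cosh x : continuity_pt cosh x.
Proof. apply derivable_continuous_pt, derivable_pt_cosh. Qed.
Lemma cont_sinh x : continuity_pt sinh x.
Proof. apply derivable_continuous_pt, derivable_pt_sinh. Qed.
Lemma cont_sin x : continuity_pt sin x.
Proof. apply continuity_sin. Qed.

Lemma dg_cont x y : continuity_2d_pt dg x y.
Proof.
  unfold dg.
  apply continuity_2d_pt_mult.
  apply continuity_2d_pt_mult.
  apply (continuity_1d_2d_pt_comp cosh (fun u v => u)); [apply cont_cosh|apply continuity_2d_pt_id1].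
  apply (continuity_1d_2d_pt_comp sin (fun u v => v)); [apply cont_sin|apply continuity_2d_pt_id2].
  apply continuity_2d_pt_inv.
  apply continuity_2d_pt_plus. apply continuity_2d_pt_const.
  simpl.
  assert (Hm : continuity_2d_pt (fun u v => sinh u * sin v) x y).
  { apply continuity_2d_pt_mult.
    apply (continuity_1d_2d_pt_comp sinh (fun u v => u)); [apply cont_sinh|apply continuity_2d_pt_id1].
    apply (continuity_1d_2d_pt_comp sin (fun u v => v)); [apply cont_sin|apply continuity_2d_pt_id2]. }
  apply continuity_2d_pt_mult; [exact Hm|].
  apply continuity_2d_pt_mult; [exact Hm|apply continuity_2d_pt_const].
  generalize (pos1sq (sinh x * sin y)); lra.
Qed.

Lemma cont_integrand w t : continuous (fun s => atan (sinh w * sin s)) t.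
Proof.
  apply (ex_derive_continuous (K:=R_AbsRing) (V:=R_NormedModule)). unfold sinh. auto_derive. easy.
Qed.

Lemma N_derive_gen w : is_derive N w (RInt (fun s => dg w s) 0 (PI/2)).
Proof.
  unfold N.
  eapply is_derive_eq.
  - apply (is_derive_RInt_param (fun w s => atan (sinh w * sin s))).
    + apply filter_forall. intros x t _. eexists. apply dg_derive.
    + intros t _. eapply continuity_2d_pt_ext.
      2: apply (dg_cont w t).
      intros; simpl. symmetry. apply Derive_dg.
    + apply filter_forall. intros y. apply (ex_RInt_continuous (V:=R_CompleteNormedModule)). intros; apply cont_integrand.
  - apply RInt_ext. intros; apply Derive_dg.
Qed.

Lemma cosh_sinh_sq w : cosh w ^2 - sinh w ^2 = 1.
Proof.
  unfold cosh, sinh. rewrite exp_Ropp. field_simplify. 2: apply Rgt_not_eq, exp_pos.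
  field. apply Rgt_not_eq, exp_pos.
Qed.
Lemma C_plus_S w : cosh w + sinh w = exp w.
Proof. unfold cosh, sinh. field. Qed.
Lemma C_minus_S w : cosh w - sinh w = exp (- w).
Proof. unfold cosh, sinh. field. Qed.
Lemma cosh_pos w : 0 < cosh w.
Proof. unfold cosh. generalize (exp_pos w) (exp_pos (-w)). lra. Qed.

Lemma CS_pos w c : -1 <= c <= 1 -> 0 < cosh w - sinh w * c /\ 0 < cosh w + sinh w * c.
Proof.
  intros Hc. generalize (cosh_sinh_sq w) (cosh_pos w). intros H1 H2.
  assert (0 < (cosh w - sinh w * c) * (cosh w + sinh w * c)).
  { assert (c^2 <= 1) by nra. nra. }
  nra.
Qed.

Lemma RInt_dg w : w <> 0 -> RInt (fun s => dg w s) 0 (PI/2) = w / sinh w.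
Proof.
  intros Hw.
  assert (HS : sinh w <> 0).
  { intro H. apply Hw. rewrite <- (arcsinh_sinh w), H. apply arcsinh_0. }
  set (Phi := fun s => - / (2 * sinh w) * (ln (cosh w + sinh w * cos s) - ln (cosh w - sinh w * cos s))).
  assert (Hi : is_RInt (fun s => dg w s) 0 (PI/2) (minus (Phi (PI/2)) (Phi 0))).
  { apply (is_RInt_derive (V:=R_CompleteNormedModule)).
    - intros x _. unfold Phi.
      destruct (CS_pos w (cos x) (COS_bound x)) as [Hm Hp].
      auto_derive. split; [exact Hp|split;[exact Hm|exact I]].
      unfold dg. generalize (cosh_sinh_sq w). intros Hq.
      assert (Hsc: sin x ^2 + cos x ^2 = 1) by (generalize (sin2_cos2 x); unfold Rsqr; intro; nra).
      replace (1 + (sinh w * sin x) ^ 2) with ((cosh w + sinh w * cos x) * (cosh w - sinh w * cos x)) by nra.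
      field. lra.
    - intros y _. apply (ex_derive_continuous (K:=R_AbsRing) (V:=R_NormedModule)).
      unfold dg, sinh, cosh. auto_derive. apply Rgt_not_eq. generalize ((exp w - exp (- w)) / 2 * sin y). intro z. nra.
  }
  rewrite (is_RInt_unique _ _ _ _ Hi).
  unfold Phi, minus, plus, opp; simpl. rewrite cos_PI2, cos_0.
  rewrite Rmult_0_r, Rplus_0_r, Rminus_0_r, Rmult_1_r, Rminus_diag, Rmult_0_r.
  rewrite C_plus_S, C_minus_S, !ln_exp. field. exact HS.
Qed.

Definition fu (u : R) := arcsinh (cosh u) - u.

Lemma sqrt_facts x : 0 < sqrt (x^2+1) /\ sqrt (x^2+1) ^2 = x^2 + 1 /\ 0 < x + sqrt (x^2+1)
  /\ 0 < sqrt (x^2+1) - x.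
Proof.
  assert (H0 : 0 <= x^2 + 1) by nra.
  assert (H1 : sqrt (x^2+1) ^2 = x^2+1) by (rewrite <- Rsqr_pow2; apply Rsqr_sqrt; exact H0).
  assert (H2 : 0 <= sqrt (x^2+1)) by apply sqrt_pos.
  repeat split; try exact H1; nra.
Qed.

Lemma exp_arcsinh x : exp (arcsinh x) = x + sqrt (x^2+1).
Proof. unfold arcsinh. apply exp_ln. apply sqrt_facts. Qed.

Lemma inv_of a b : a * b = 1 -> / a = b.
Proof. intros H. assert (a <> 0) by (intro; subst; lra). rewrite <- (Rmult_1_l (/a)), <- H. field. auto. Qed.

Lemma sinh_exp y : sinh y = (exp y - / exp y) / 2.
Proof. unfold sinh. rewrite exp_Ropp. reflexivity. Qed.

Section Id.
Variable u : R.
Let c := cosh u.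
Let s := sinh u.
Let r := sqrt (c^2+1).

Lemma fu_facts :
  sinh (fu u) = c^2 - r*s /\ sinh (2*u + fu u) = c^2 + r*s.
Proof.
  destruct (sqrt_facts c) as [Hr0 [Hr2 [Hr3 Hr4]]]. fold r in Hr0, Hr2, Hr3, Hr4.
  assert (Hcs : c^2 - s^2 = 1) by apply cosh_sinh_sq.
  assert (Ep : exp u = c + s) by (symmetry; apply C_plus_S).
  assert (Em : exp (-u) = c - s) by (symmetry; apply C_minus_S).
  assert (Ef : exp (fu u) = (c + r) * (c - s)).
  { unfold fu, Rminus. rewrite exp_plus, exp_arcsinh, Em. reflexivity. }
  assert (EP : exp (2*u + fu u) = (c + s) * (c + r)).
  { rewrite exp_plus, Ef. replace (2*u) with (u+u) by ring. rewrite exp_plus, Ep.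
    replace ((c + s) * (c + s) * ((c + r) * (c - s))) with ((c+s)*(c+r)*((c+s)*(c-s))) by ring.
    replace ((c+s)*(c-s)) with 1 by nra. ring. }
  split.
  - rewrite sinh_exp, Ef. rewrite (inv_of _ ((r - c) * (c + s))). 2: nra.
    nra.
  - rewrite sinh_exp, EP. rewrite (inv_of _ ((c - s) * (r - c))). 2: nra.
    nra.
Qed.
End Id.

Lemma N_derive w : w <> 0 -> is_derive N w (w / sinh w).
Proof. intros Hw. rewrite <- RInt_dg by exact Hw. apply N_derive_gen. Qed.

Lemma fu_derive u : is_derive fu u (sinh u / sqrt (cosh u ^2 + 1) - 1).
Proof.
  unfold fu.
  apply (is_derive_minus (fun u => arcsinh (cosh u)) (fun u => u)).
  - eapply is_derive_eq.
    + apply (is_derive_comp arcsinh cosh).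
      * apply is_derive_Reals, derivable_pt_lim_arcsinh.
      * apply is_derive_cosh.
    + simpl. unfold scal; simpl; unfold mult; simpl. field.
      apply Rgt_not_eq, sqrt_facts.
  - eapply is_derive_eq. apply is_derive_id. reflexivity.
Qed.

Lemma fu_pos u : 0 < fu u.
Proof.
  unfold fu. rewrite <- (arcsinh_sinh u) at 2.
  assert (arcsinh (sinh u) < arcsinh (cosh u)); [|lra].
  apply arcsinh_lt. generalize (C_minus_S u) (exp_pos (-u)). lra.
Qed.

Lemma P_pos u : 0 < 2*u + fu u.
Proof.
  unfold fu.
  assert (arcsinh (sinh (-u)) < arcsinh (cosh u)).
  { apply arcsinh_lt. unfold sinh, cosh. rewrite Ropp_involutive.
    generalize (exp_pos u) (exp_pos (-u)). lra. }
  rewrite arcsinh_sinh in H. lra.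
Qed.

Definition H (u : R) := /4 * (N (2*u + fu u) - N (fu u)) + /2 * (u * fu u).

Lemma H_derive u : is_derive H u (fu u).
Proof.
  set (f' := sinh u / sqrt (cosh u ^2 + 1) - 1).
  assert (Df := fu_derive u). fold f' in Df.
  assert (D1 : is_derive (fun u => N (2*u + fu u)) u ((2 + f') * ((2*u + fu u) / sinh (2*u + fu u)))).
  { eapply is_derive_eq.
    apply (is_derive_comp N (fun u => 2*u + fu u)).
    apply N_derive. apply Rgt_not_eq, P_pos.
    apply (is_derive_plus (fun u => 2 * u) fu).
    eapply is_derive_eq. apply (is_derive_scal (fun u => u)). apply is_derive_id. reflexivity.
    exact Df.
    unfold scal, plus; simpl; unfold mult; simpl. unfold one; simpl. ring. }
  assert (D2 : is_derive (fun u => N (fu u)) u (f' * (fu u / sinh (fu u)))).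
  { eapply is_derive_eq.
    apply (is_derive_comp N fu).
    apply N_derive. apply Rgt_not_eq, fu_pos. exact Df.
    reflexivity. }
  assert (D3 : is_derive (fun u => u * fu u) u (1 * fu u + u * f')).
  { eapply is_derive_eq. apply (is_derive_mult (fun u => u) fu).
    apply is_derive_id. exact Df. intros; apply Rmult_comm. reflexivity. }
  unfold H.
  eapply is_derive_eq.
  apply (is_derive_plus (fun u => /4 * (N (2*u + fu u) - N (fu u))) (fun u => /2 * (u * fu u))).
  apply is_derive_scal. apply (is_derive_minus (fun u => N (2*u + fu u)) (fun u => N (fu u))).
  exact D1. exact D2.
  apply is_derive_scal. exact D3.
  unfold plus, minus, opp; simpl.
  destruct (fu_facts u) as [S1 S2]. rewrite S1, S2.
  unfold f'.
  destruct (sqrt_facts (cosh u)) as [Hr0 [Hr2 [Hr3 Hr4]]].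
  assert (Hcs : cosh u ^2 - sinh u ^2 = 1) by apply cosh_sinh_sq.
  set (r := sqrt (cosh u ^2 + 1)) in *.
  set (c := cosh u) in *. set (s := sinh u) in *.
  set (f := fu u).
  assert (Hs2 : s^2 = c^2 - 1) by lra.
  assert (Hrs1 : 0 < r - s) by nra.
  assert (Hrs2 : 0 < r + s) by nra.
  assert (K1 : (r - s)*(c^2 + r*s) = r + s).
  { assert (K : (r - s)*(c^2 + r*s) = (r+s) + s*(r^2 - c^2 - 1) - r*(s^2 - c^2 + 1)) by ring.
    rewrite K, Hr2, Hs2. ring. }
  assert (K2 : (r + s)*(c^2 - r*s) = r - s).
  { assert (K : (r + s)*(c^2 - r*s) = (r-s) - s*(r^2 - c^2 - 1) - r*(s^2 - c^2 + 1)) by ring.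
    rewrite K, Hr2, Hs2. ring. }
  assert (E2 : c^2 + r*s = (r+s)/(r-s)) by (rewrite <- K1; field; lra).
  assert (E1 : c^2 - r*s = (r-s)/(r+s)) by (rewrite <- K2; field; lra).
  rewrite E1, E2. unfold plus; simpl.
  field. lra.
Qed.

Lemma exRI w a b : ex_RInt (fun s => atan (sinh w * sin s)) a b.
Proof. apply (ex_RInt_continuous (V:=R_CompleteNormedModule)). intros; apply cont_integrand. Qed.

Lemma exRc (k a b : R) : ex_RInt (fun _ => k) a b.
Proof. apply (ex_RInt_continuous (V:=R_CompleteNormedModule)). intros; apply continuous_const. Qed.

Lemma N0 : N 0 = 0.
Proof.
  unfold N. rewrite sinh_0.
  rewrite (RInt_ext _ (fun _ => 0)).
  - rewrite RInt_const. unfold scal; simpl; unfold mult; simpl. ring.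
  - intros. rewrite Rmult_0_l. apply atan_0.
Qed.

Lemma N_cont0 : continuous N 0.
Proof.
  apply (ex_derive_continuous (K:=R_AbsRing) (V:=R_NormedModule)).
  eexists. apply N_derive_gen.
Qed.

Lemma N_le w : N w <= PI^2/4.
Proof.
  unfold N. eapply Rle_trans.
  apply (RInt_le _ (fun _ => PI/2)).
  - generalize PI_RGT_0; lra.
  - apply exRI.
  - apply exRc.
  - intros x _. generalize (atan_bound (sinh w * sin x)). lra.
  - rewrite RInt_const. unfold scal; simpl; unfold mult; simpl. lra.
Qed.

Lemma atan_le_id x : 0 <= x -> atan x <= x.
Proof.
  intros Hx.
  assert (Hi : is_RInt (fun t => / (1 + t^2)) 0 x (minus (atan x) (atan 0))).
  { apply (is_RInt_derive (V:=R_CompleteNormedModule)).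
    - intros y _. eapply is_derive_eq. apply is_derive_atan. unfold Rsqr. simpl. f_equal. ring.
    - intros y _. apply (ex_derive_continuous (K:=R_AbsRing) (V:=R_NormedModule)).
      auto_derive. generalize (pos1sq y). lra. }
  assert (Hle : RInt (fun t => / (1 + t^2)) 0 x <= RInt (fun _ => 1) 0 x).
  { apply RInt_le. exact Hx. eexists; exact Hi. apply exRc.
    intros y _. rewrite <- Rinv_1. apply Rinv_le_contravar. lra. generalize (pow2_ge_0 y). lra. }
  rewrite (is_RInt_unique _ _ _ _ Hi), RInt_const in Hle.
  unfold minus, plus, opp, scal in Hle; simpl in Hle; unfold mult in Hle; simpl in Hle.
  rewrite atan_0 in Hle. lra.
Qed.

Lemma N_lower w d : 0 < d < PI/2 -> 0 < sinh w ->
  (PI/2 - d) * (PI/2 - / (sinh w * sin d)) <= N w.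
Proof.
  intros Hd Hw.
  assert (Hsd : 0 < sin d) by (apply sin_gt_0; lra).
  assert (Ha : 0 < sinh w * sin d) by nra.
  unfold N. rewrite <- (RInt_Chasles (V:=R_CompleteNormedModule) _ 0 d (PI/2)) by apply exRI.
  unfold plus; simpl.
  assert (H1 : 0 <= RInt (fun s => atan (sinh w * sin s)) 0 d).
  { apply RInt_ge_0. lra. apply exRI. intros x Hx.
    rewrite <- atan_0. destruct (Req_dec x 0); [subst; lra|].
    left. apply atan_increasing. apply Rmult_lt_0_compat. exact Hw. apply sin_gt_0; lra. }
  assert (H2 : RInt (fun _ => atan (sinh w * sin d)) d (PI/2) <= RInt (fun s => atan (sinh w * sin s)) d (PI/2)).
  { apply RInt_le. lra. apply exRc. apply exRI. intros x Hx.
    destruct (Req_dec (sin d) (sin x)) as [E|E]; [rewrite E; lra|].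
    left. apply atan_increasing. apply Rmult_lt_compat_l. exact Hw.
    assert (sin d <= sin x) by (apply sin_incr_1; lra). lra. }
  rewrite RInt_const in H2. unfold scal in H2; simpl in H2; unfold mult in H2; simpl in H2.
  assert (H3 : PI/2 - / (sinh w * sin d) <= atan (sinh w * sin d)).
  { rewrite <- (Rinv_inv (sinh w * sin d)) at 2. rewrite atan_inv.
    2: apply Rinv_0_lt_compat; exact Ha.
    generalize (atan_le_id (/ (sinh w * sin d))). intro Hq.
    assert (0 <= / (sinh w * sin d)) by (left; apply Rinv_0_lt_compat; exact Ha).
    lra. }
  assert (0 <= PI/2 - d) by lra.
  nra.
Qed.

Lemma sinh_ge_half y : 0 <= y -> y / 2 <= sinh y.
Proof.
  intros Hy. unfold sinh. generalize (exp_ineq1_le y). intros H1.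
  rewrite exp_Ropp.
  assert (1 <= exp y) by lra.
  assert (/ exp y <= 1) by (rewrite <- Rinv_1; apply Rinv_le_contravar; lra).
  lra.
Qed.

Lemma N_lim : is_lim N p_infty (PI^2/4).
Proof.
  apply is_lim_spec. intros eps. simpl.
  generalize PI_RGT_0 PI2_1. intros HPI HPI2.
  set (d := Rmin 1 (eps/(2*PI))).
  assert (Hep : 0 < eps) by apply cond_pos.
  assert (Hd0 : 0 < d) by (unfold d; apply Rmin_glb_lt; [lra|]; apply Rdiv_lt_0_compat; lra).
  assert (Hd1 : d <= 1) by apply Rmin_l.
  assert (Hd2 : d <= eps/(2*PI)) by apply Rmin_r.
  assert (Hsd : 0 < sin d) by (apply sin_gt_0; lra).
  exists (4*PI/(eps*sin d)). intros y Hy.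
  assert (HM : 0 < 4*PI/(eps*sin d)) by (apply Rdiv_lt_0_compat; nra).
  assert (Ha : y/2 <= sinh y) by (apply sinh_ge_half; lra).
  assert (Hay : 2*PI/(eps * sin d) < sinh y).
  { apply Rlt_le_trans with (y/2); [|exact Ha].
    replace (2*PI/(eps*sin d)) with ((4*PI/(eps*sin d))/2) by (field; lra). lra. }
  assert (Hpa : 0 < sinh y).
  { apply Rlt_trans with (2*PI/(eps*sin d)); [apply Rdiv_lt_0_compat; nra | exact Hay]. }
  assert (Heta : / (sinh y * sin d) < eps / (2*PI)).
  { assert (Hp2 : 0 < 2*PI/(eps*sin d) * sin d) by (apply Rmult_lt_0_compat; [apply Rdiv_lt_0_compat; nra|exact Hsd]).
    apply Rlt_le_trans with (/ (2*PI/(eps*sin d) * sin d)).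
    - apply Rinv_lt_contravar. apply Rmult_lt_0_compat; [exact Hp2|]. apply Rmult_lt_0_compat; assumption. apply Rmult_lt_compat_r; assumption.
    - right. field. lra. }
  assert (Hetap : 0 < / (sinh y * sin d)) by (apply Rinv_0_lt_compat; nra).
  assert (HL := N_lower y d (conj Hd0 (Rle_lt_trans _ _ _ Hd1 HPI2)) Hpa).
  assert (HU := N_le y).
  rewrite Rabs_left1 by lra.
  set (eta := / (sinh y * sin d)) in *.
  assert (PI/2 * d <= eps/4).
  { apply Rle_trans with (PI/2 * (eps/(2*PI))). apply Rmult_le_compat_l; lra. right; field; lra. }
  assert (PI/2 * eta < eps/4).
  { apply Rlt_le_trans with (PI/2 * (eps/(2*PI))). apply Rmult_lt_compat_l; lra. right; field; lra. }
  assert (0 <= d * eta) by nra.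
  nra.
Qed.

Lemma fu_bound x : 0 <= x -> fu x <= 2 * exp (-x).
Proof.
  intros Hx.
  destruct (sqrt_facts (cosh x)) as [Hr0 [Hr2 [Hr3 Hr4]]].
  assert (Hcs : cosh x ^2 - sinh x ^2 = 1) by apply cosh_sinh_sq.
  assert (Ep : exp x = cosh x + sinh x) by (symmetry; apply C_plus_S).
  assert (Em : exp (-x) = cosh x - sinh x) by (symmetry; apply C_minus_S).
  assert (Ef : exp (fu x) = (cosh x + sqrt (cosh x ^2 + 1)) * (cosh x - sinh x)).
  { unfold fu, Rminus. rewrite exp_plus, exp_arcsinh, Em. reflexivity. }
  assert (Hl : fu x <= exp (fu x) - 1) by (generalize (exp_ineq1_le (fu x)); lra).
  rewrite Ef in Hl. rewrite Em.
  set (r := sqrt (cosh x ^2 + 1)) in *. set (c := cosh x) in *. set (s := sinh x) in *.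
  assert (He1 : exp (-x) <= 1).
  { rewrite exp_Ropp. rewrite <- Rinv_1. apply Rinv_le_contravar. lra.
    generalize (exp_ineq1_le x). lra. }
  assert (He0 : 0 < exp (-x)) by apply exp_pos.
  rewrite Em in He1, He0.
  assert (Hc : 0 < c) by apply cosh_pos.
  assert (Hrc : r <= c + 1) by nra.
  assert (Hprod : (c + s) * (c - s) = 1) by nra.
  assert ((c + r) * (c - s) <= (2*c + 1) * (c - s)) by nra.
  assert (2 * c * (c - s) = 1 + (c - s)^2) by nra.
  nra.
Qed.

Lemma lim0 (g : R -> R) K : (forall x, 1 <= x -> 0 <= g x <= K / x) -> is_lim g p_infty 0.
Proof.
  intros Hg. apply is_lim_spec. intros eps. simpl.
  assert (Hep : 0 < eps) by apply cond_pos.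
  exists (Rmax 1 (K/eps)). intros x Hx.
  assert (H1 : 1 < x) by (eapply Rle_lt_trans; [apply Rmax_l|exact Hx]).
  assert (H2 : K/eps < x) by (eapply Rle_lt_trans; [apply Rmax_r|exact Hx]).
  destruct (Hg x (Rlt_le _ _ H1)) as [Ha Hb].
  rewrite Rminus_0_r, Rabs_pos_eq by exact Ha.
  apply Rle_lt_trans with (K/x); [exact Hb|].
  apply (Rmult_lt_reg_r x). lra. unfold Rdiv. rewrite Rmult_assoc, Rinv_l by lra.
  apply (Rmult_lt_reg_r (/eps)). apply Rinv_0_lt_compat; lra.
  replace (eps * x * / eps) with x by (field; lra). lra.
Qed.

Lemma fu_lim : is_lim fu p_infty 0.
Proof.
  apply (lim0 _ 2). intros x Hx. split. left; apply fu_pos.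
  eapply Rle_trans. apply fu_bound; lra.
  rewrite exp_Ropp. unfold Rdiv. apply Rmult_le_compat_l. lra.
  apply Rinv_le_contravar. lra. generalize (exp_ineq1_le x). lra.
Qed.

Lemma xfu_lim : is_lim (fun x => x * fu x) p_infty 0.
Proof.
  apply (lim0 _ 8). intros x Hx. split. left; apply Rmult_lt_0_compat; [lra|apply fu_pos].
  assert (Hb := fu_bound x ltac:(lra)).
  assert (He : (1 + x/2)^2 <= exp x).
  { replace x with (x/2 + x/2) at 2 by field. rewrite exp_plus.
    generalize (exp_ineq1_le (x/2)). intro. simpl. nra. }
  rewrite exp_Ropp in Hb.
  assert (Hx2 : 0 < exp x) by apply exp_pos.
  assert (x * fu x <= x * (2 * / exp x)) by (apply Rmult_le_compat_l; lra).
  assert (x * (2 * / exp x) <= 8 / x).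
  { unfold Rdiv. apply (Rmult_le_reg_r (exp x * x)). nra.
    replace (x * (2 * / exp x) * (exp x * x)) with (2 * x * x) by (field; lra).
    replace (8 * / x * (exp x * x)) with (8 * exp x) by (field; lra). nra. }
  lra.
Qed.

Lemma P_lim : is_lim (fun x => 2*x + fu x) p_infty p_infty.
Proof.
  apply is_lim_spec. intros M. simpl. exists (Rabs M). intros x Hx.
  generalize (fu_pos x) (Rle_abs M) (Rabs_pos M). lra.
Qed.

Lemma H_lim : is_lim H p_infty (PI^2/16).
Proof.
  assert (L1 : is_lim (fun x => N (2*x + fu x)) p_infty (PI^2/4)).
  { apply (is_lim_comp N (fun x => 2*x + fu x) p_infty (PI^2/4) p_infty).
    apply N_lim. apply P_lim. exists 0. intros; discriminate. }
  assert (L2 : is_lim (fun x => N (fu x)) p_infty 0).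
  { rewrite <- N0. apply is_lim_comp_continuous. apply fu_lim. apply N_cont0. }
  assert (L3 := is_lim_minus' _ _ _ _ _ L1 L2).
  assert (L4 := is_lim_scal_l _ (/4) _ _ L3).
  assert (L5 := is_lim_scal_l _ (/2) _ _ xfu_lim).
  assert (L6 := is_lim_plus' _ _ _ _ _ L4 L5).
  simpl in L6.
  replace (PI^2/16) with (/ 4 * (PI ^ 2 / 4 - 0) + / 2 * 0) by field.
  exact L6.
Qed.

Lemma H0 : H 0 = 0.
Proof. unfold H. replace (2*0 + fu 0) with (fu 0) by ring. ring. Qed.

Theorem theorem1 :
  is_RInt_gen (fun u : R => arcsinh (cosh u) - u)
    (at_point 0) (Rbar_locally p_infty) (PI ^ 2 / 16).
Proof.
  assert (HD : Derive H = (fun u => arcsinh (cosh u) - u)).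
  { apply functional_extensionality. intro u. apply is_derive_unique, H_derive. }
  rewrite <- HD.
  replace (PI^2/16) with (PI^2/16 - H 0) by (rewrite H0; ring).
  apply is_RInt_gen_Derive.
  - apply filter_forall. intros ab x _. eexists. apply H_derive.
  - apply filter_forall. intros ab x _. rewrite HD.
    apply (ex_derive_continuous (K:=R_AbsRing) (V:=R_NormedModule)).
    eexists. apply fu_derive.
  - intros P HP. unfold filtermap, at_point. apply locally_singleton. exact HP.
  - apply H_lim.
Qed.
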